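(* Let $T$ be a finite tree and let $P=p_0p_1\dots p_k$ ($k\ge1$) be a path in $T$ such that each of $p_1,\dots,p_{k-1}$ has degree $2$ in $T$. Let $B$ be the vertex set of the component containing $p_k$ of the graph obtained from $T$ by deleting the edges of $P$. Let $T'$ be the tree obtained from $T$ by deleting all edges between $p_k$ and $\Gamma(p_k)\setminus\{p_{k-1}\}$ and adding the edges between $p_0$ and $\Gamma(p_k)\setminus\{p_{k-1}\}$ instead. Then for every $\ell\ge1$, \[\omega_{\ell}(p_0,T[B\cup P])-\omega_{\ell}(p_0,P)\leq \omega_{\ell}(p_0,T'[B\cup P])-\omega_{\ell}(p_0,P).\]
   Context: $\Gamma(v)$ is the set of neighbours of $v$ in $T$. For a graph $G$ containing the vertices of $B$ and $P$, $G[B\cup P]$ is the subgraph of $G$ induced by $B\cup\{p_0,\dots,p_k\}$. For a graph $G$, a vertex $x$ and $\ell\ge1$, $\omega_\ell(x,G)$ is the number of walks of length $\ell$ in $G$ starting at $x$. $P$ is regarded as a graph (the path). *)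

(* Defs.v *)
From HB Require Import structures.
From mathcomp Require Import all_boot all_order all_algebra.
Set Implicit Arguments. Unset Strict Implicit. Unset Printing Implicit Defensive.

Definition simple_graph (V : finType) (e : rel V) : Prop :=
  symmetric e /\ irreflexive e.

Definition has_cycle (V : finType) (e : rel V) : Prop :=
  exists s : seq V, [/\ 3 <= size s, uniq s & cycle e s].

Definition is_tree (V : finType) (e : rel V) : Prop :=
  [/\ simple_graph e, 0 < #|V|, (forall x y, connect e x y) & ~ has_cycle e].

Definition deg (V : finType) (e : rel V) (x : V) : nat := #|[set y | e x y]|.

Definition nbhd (V : finType) (e : rel V) (x : V) : {set V} := [set y | e x y].

(* The path p_0 p_1 ... p_k given by p : nat -> V (only p 0 .. p k matter). *)
Definition is_path_in (V : finType) (e : rel V) (p : nat -> V) (k : nat) : Prop :=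
  (forall i j, i <= k -> j <= k -> p i = p j -> i = j) /\
  (forall i, i < k -> e (p i) (p i.+1)).

Definition path_edge (V : finType) (p : nat -> V) (k : nat) : rel V :=
  fun u v => [exists i : 'I_k, ((u == p i) && (v == p i.+1))
                            || ((v == p i) && (u == p i.+1))].

Definition path_verts (V : finType) (p : nat -> V) (k : nat) : {set V} :=
  [set p (nat_of_ord i) | i : 'I_k.+1].

Definition del_path_edges (V : finType) (e : rel V) (p : nat -> V) (k : nat) : rel V :=
  fun u v => e u v && ~~ path_edge p k u v.

Definition compB (V : finType) (e : rel V) (p : nat -> V) (k : nat) : {set V} :=
  [set v | connect (del_path_edges e p k) (p k) v].

Definition switched (V : finType) (e : rel V) (p : nat -> V) (k : nat) : rel V :=
  let N := nbhd e (p k) :\ p k.-1 in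
  fun u v =>
    [|| [&& e u v, ~~ ((u == p k) && (v \in N)) & ~~ ((v == p k) && (u \in N))],
        (u == p 0) && (v \in N)
      | (v == p 0) && (u \in N)].

Definition induced (V : finType) (e : rel V) (S : {set V}) : rel V :=
  fun u v => [&& e u v, u \in S & v \in S].

Definition walks (V : finType) (l : nat) (x : V) (e : rel V) : nat :=
  #|[set w : l.-tuple V | path e x w]|.

(* Main.v *)
Require Import Defs.
From mathcomp Require Import all_boot all_order all_algebra.
From mathcomp Require Import zify.
Import Order.TTheory GRing.Theory Num.Theory.
Set Implicit Arguments. Unset Strict Implicit. Unset Printing Implicit Defensive.

Section Walks.
Variable V : finType.

Fixpoint wk (e : rel V) (l : nat) (x : V) : nat :=
  if l is l'.+1 then \sum_(y | e x y) wk e l' y else 1.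

Lemma walksE e l x : walks l x e = wk e l x.
Proof.
elim: l x => [|l IH] x.
  rewrite /walks (_ : [set w : 0.-tuple V | path e x w] = setT).
    by rewrite cardsT card_tuple.
  by apply/setP => w; rewrite !inE tuple0.
rewrite /= -(eq_bigr _ (fun y _ => IH y)) /walks.
have -> : [set w : l.+1.-tuple V | path e x w] =
  (fun u : V * l.-tuple V => [tuple of u.1 :: u.2]) @:
     [set u : V * l.-tuple V | e x u.1 && path e u.1 u.2].
  apply/setP => w; rewrite inE; apply/idP/imsetP.
    case: w => [[|y w'] //= Hs] Hp.
    have Hs' : size w' == l by [].
    exists (y, Tuple Hs'); first by rewrite inE.
    by apply: val_inj.
  by case=> [[y w']]; rewrite inE => /= Hp ->.
rewrite card_imset; last first.
  by move=> [y1 w1] [y2 w2] /(congr1 val) /= [-> /val_inj ->].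
rewrite -sum1_card.
rewrite (eq_bigl (fun u : V * l.-tuple V => e x u.1 && path e u.1 u.2)); last by move=> u; rewrite inE.
rewrite -(pair_big_dep (fun y : V => e x y) (fun y (w : l.-tuple V) => path e y w) (fun _ _ => 1)).
apply: eq_bigr => y _; rewrite sum1_card; apply: eq_card => w; by rewrite inE.
Qed.

Lemma wk_sim (e1 e2 : rel V) (R : V -> V -> Prop) :
  (forall x y, R x y -> exists f : V -> V,
      (forall a b, e1 x a -> e1 x b -> f a = f b -> a = b) /\
      (forall a, e1 x a -> e2 y (f a) /\ R a (f a))) ->
  forall l x y, R x y -> wk e1 l x <= wk e2 l y.
Proof.
move=> HR; elim=> [|l IH] x y Rxy //=.
have [f [finj Hf]] := HR x y Rxy.
apply: (@leq_trans (\sum_(a | e1 x a) wk e2 l (f a))).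
  by apply: leq_sum => a Ha; apply: IH; case: (Hf a Ha).
have -> : \sum_(a | e1 x a) wk e2 l (f a) = \sum_(b in f @: [set a | e1 x a]) wk e2 l b.
  rewrite big_imset /=; last by move=> a b; rewrite !inE; apply: finj.
  by apply: eq_bigl => a; rewrite inE.
rewrite [X in _ <= X](bigID (fun b => b \in f @: [set a | e1 x a])) /=.
apply: leq_trans (leq_addr _ _).
rewrite [X in _ <= X](eq_bigl (fun b => b \in f @: [set a | e1 x a])) //.
move=> b; apply/andP/idP => [[] //| Hb]; split => //.
by case/imsetP: Hb => a; rewrite inE => Ha ->; case: (Hf a Ha).
Qed.

Lemma wk_mono (e : rel V) (S : {set V}) :
  (forall x y, e x y -> y \in S) -> (forall x, x \in S -> exists y, e x y) ->
  forall l x, x \in S -> wk e l x <= wk e l.+1 x.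
Proof.
move=> HS Hn; elim=> [|l IH] x xS /=.
  have [y Hy] := Hn x xS.
  by rewrite (bigD1 y) //= ltn_addr.
by apply: leq_sum => y Hy; apply: IH; apply: HS Hy.
Qed.

End Walks.

Section Struct.
Variables (V : finType) (T : rel V) (p : nat -> V) (k : nat).
Hypotheses (Htree : is_tree T) (Hk : 1 <= k) (Hpath : is_path_in T p k)
  (Hdeg : forall i, 1 <= i -> i <= k.-1 -> deg T (p i) = 2).

Local Notation P := (path_verts p k).
Local Notation B := (compB T p k).
Local Notation D := (del_path_edges T p k).

Lemma Tsym x y : T x y = T y x.
Proof. by case: Htree => [[Hs _] _ _ _]; apply: Hs. Qed.

Lemma Tirr x : T x x = false.
Proof. by case: Htree => [[_ Hi] _ _ _]; apply: Hi. Qed.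

Lemma p_inj i j : i <= k -> j <= k -> p i = p j -> i = j.
Proof. by case: Hpath => H _; apply: H. Qed.

Lemma Tp i : i < k -> T (p i) (p i.+1).
Proof. by case: Hpath => _ H; apply: H. Qed.

Lemma inPP x : reflect (exists2 i, i <= k & x = p i) (x \in P).
Proof.
apply: (iffP imsetP) => [[i _ ->]|[i Hi ->]]; first by exists i; rewrite // -ltnS.
by exists (Ordinal (Hi : i < k.+1)).
Qed.

Lemma pP i : i <= k -> p i \in P.
Proof. by move=> Hi; apply/inPP; exists i. Qed.

Lemma path_edgeP u v : path_edge p k u v -> u \in P /\ v \in P.
Proof.
case/existsP => i /orP [] /andP [/eqP -> /eqP ->];
  split; apply: pP; have := ltn_ord i; lia.
Qed.

Lemma path_edge_pp i j : i <= k -> j <= k ->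
  path_edge p k (p i) (p j) = (j == i.+1) || (i == j.+1).
Proof.
move=> Hi Hj; apply/existsP/idP.
  case=> a /orP [] /andP [/eqP E1 /eqP E2]; have := ltn_ord a => Ha.
    have := p_inj Hi (ltnW Ha) E1; have := p_inj Hj Ha E2; lia.
  have := p_inj Hj (ltnW Ha) E1; have := p_inj Hi Ha E2; lia.
case/orP => /eqP E.
  have Ha : i < k by lia.
  by exists (Ordinal Ha); rewrite /= E !eqxx.
have Ha : j < k by lia.
by exists (Ordinal Ha); rewrite /= E !eqxx orbT.
Qed.

Lemma path_edge_p i : i < k -> path_edge p k (p i) (p i.+1).
Proof. by move=> Hi; rewrite path_edge_pp // ?eqxx // ltnW. Qed.

Lemma nbr_int i y : 1 <= i -> i < k -> T (p i) y -> y = p i.-1 \/ y = p i.+1.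
Proof.
move=> H1 H2 Hy.
have Hd := Hdeg H1 (_ : i <= k.-1); rewrite /deg in Hd.
have Hne : p i.-1 != p i.+1.
  apply/eqP => /p_inj; lia.
have Hsub : [set p i.-1; p i.+1] \subset [set y | T (p i) y].
  apply/subsetP => z; rewrite !inE => /orP [] /eqP ->.
    by rewrite Tsym (_ : i = i.-1.+1) ?Tp; lia.
  by rewrite Tp.
have : [set p i.-1; p i.+1] == [set y | T (p i) y].
  by rewrite eqEcard Hsub cards2 Hne Hd ?leqnn //; lia.
move/eqP => E; have : y \in [set y | T (p i) y] by rewrite inE.
by rewrite -E !inE => /orP [] /eqP ->; [left|right].
Qed.

Lemma connect_last a b : connect D a b -> a != b -> exists2 u, connect D a u & D u b.
Proof.
case/connectP => s Hs ->; case/lastP: s Hs => [|s u]; first by rewrite eqxx.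
rewrite rcons_path last_rcons => /andP [Hs Hu] _.
exists (last a s) => //; apply/connectP; by exists s.
Qed.

Lemma notB_int j : 1 <= j -> j < k -> p j \notin B.
Proof.
move=> H1 H2; apply/negP; rewrite inE => Hc.
have Hne : p k != p j by apply/eqP => /p_inj; lia.
have [u _ /andP [Hu Hpe]] := connect_last Hc Hne.
rewrite Tsym in Hu; case: (nbr_int H1 H2 Hu) => E; subst u.
  by move: Hpe; rewrite path_edge_pp; lia.
by move: Hpe; rewrite path_edge_pp; lia.
Qed.

Lemma path_iota n a : (forall i, a <= i -> i < a + n -> T (p i) (p i.+1)) ->
  path T (p a) (map p (iota a.+1 n)) && (last (p a) (map p (iota a.+1 n)) == p (a + n)).
Proof.
elim: n a => [|n IH] a H /=; first by rewrite addn0.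
rewrite H ?leqnn //; last lia.
have H' : forall i, a.+1 <= i -> i < a.+1 + n -> T (p i) (p i.+1).
  by move=> i H1 H2; apply: H; lia.
by have := IH a.+1 H'; rewrite addnS addSn.
Qed.

Lemma notB_0 : p 0 \notin B.
Proof.
apply/negP; rewrite inE => /connectP [s Hs].
case/shortenP: Hs => s' Hs' Hu _ Hl.
case/lastP: s' Hs' Hu Hl => [|s'' y]; first by move=> _ _ /p_inj; lia.
rewrite last_rcons => Hs' Hu Hy; subst y.
have Hc := path_connect Hs'.
have HnP : forall x, x \in s'' -> x \notin P.
  move=> x Hx; apply/negP => /inPP [j Hj Ex]; subst x.
  move: Hu; rewrite /= rcons_uniq mem_rcons inE => /andP [/norP [_ H1] /andP [H2 _]].
  case: (ltngtP j k) => [Hjk||E]; last by move: Hx; rewrite E => Hx; rewrite Hx in H1.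
  - case: j Hj Hjk Hx H2 => [|j] Hj Hjk Hx H2; first by rewrite Hx in H2.
    have Hcj : connect D (p k) (p j.+1) by apply: Hc; rewrite inE mem_rcons inE Hx !orbT.
    by have := notB_int (ltn0Sn j) Hjk; rewrite /compB inE Hcj.
  - lia.
case: Htree => _ _ _; apply; exists (map p (iota 0 k.+1) ++ s''); split.
- rewrite size_cat size_map size_iota.
  case: s'' Hs' {Hu HnP Hc} => [|x s0] /=; last by lia.
  rewrite andbT /del_path_edges path_edge_pp //.
  case: (ltnP 1 k) => //; lia.
- rewrite cat_uniq map_inj_in_uniq ?iota_uniq; last first.
    by move=> a b; rewrite !mem_iota => Ha Hb /p_inj; apply; lia.
  move: Hu; rewrite /= rcons_uniq => /andP [_ /andP [_ ->]]; rewrite andbT /=.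
  apply/hasPn => x Hx; apply/negP => Hm; have := HnP _ Hx; case/negP.
  move: Hm; rewrite inE => /orP [/eqP ->|/seq.mapP [j]]; first by apply: pP.
  rewrite mem_iota => Hj ->; apply: pP; lia.
 
- rewrite /cycle /= rcons_cat cat_path.
  have := path_iota (n := k) (a := 0) (fun i _ H => Tp (H : i < k)).
  case/andP => -> /eqP ->; rewrite add0n /=.
  by apply: sub_path Hs' => a b /andP [].
Qed.

Lemma notB j : j < k -> p j \notin B.
Proof. by case: j => [|j] H; [apply: notB_0 | apply: notB_int]. Qed.

Local Notation S := (B :|: P).
Local Notation N := (nbhd T (p k) :\ p k.-1).
Local Notation G := (induced T S).
Local Notation G' := (induced (switched T p k) S).

Lemma inB x : (x \in B) = connect D (p k) x.
Proof. by rewrite /compB inE. Qed.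

Lemma adj0 i j : i < k -> j <= k -> T (p i) (p j) -> j = i.+1 \/ i = j.+1.
Proof.
move=> Hi Hj Ht; case: i Hi Ht => [|i] Hi Ht.
  case: j Hj Ht => [|j] Hj Ht; first by rewrite Tirr in Ht.
  case: (ltngtP j.+1 k) => [Hjk||E]; last 1 first.
  - case: (ltnP 1 k) => [H2|H2]; last by left; lia.
    have Hd : D (p k) (p 0).
      have Ht' : T (p k) (p 0) by rewrite Tsym -E.
      by rewrite /del_path_edges Ht' path_edge_pp //; lia.
    by have := notB_0; rewrite inB connect1.
  - rewrite Tsym in Ht; case: (nbr_int (ltn0Sn j) Hjk Ht) => /p_inj; lia.
  - lia.
case: (nbr_int (ltn0Sn i) Hi Ht) => /p_inj; lia.
Qed.

Lemma adjP i j : i <= k -> j <= k -> T (p i) (p j) -> j = i.+1 \/ i = j.+1.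
Proof.
move=> Hi Hj Ht; case: (ltnP i k) => Hik; first exact: adj0.
case: (ltnP j k) => Hjk.
  by rewrite Tsym in Ht; case: (adj0 Hjk Hi Ht); [right|left].
have Eij : i = j by lia.
by rewrite Eij Tirr in Ht.
Qed.

Lemma notP_B x : x \in S -> x \notin P -> x \in B.
Proof. by rewrite inE => /orP [] // ->. Qed.

Lemma B_notP_T x j : x \in B -> x \notin P -> j < k -> T x (p j) = false.
Proof.
move=> xB xP Hj; apply/negP => Ht.
have Hd : D x (p j).
  rewrite /del_path_edges Ht /=; apply/negP => /path_edgeP [H _].
  by rewrite H in xP.
have := notB Hj; rewrite inB (connect_trans _ (connect1 Hd)) //.
by rewrite -inB.
Qed.

Lemma N_notP x : x \in N -> x \notin P.
Proof.
rewrite !inE => /andP [Hne Ht]; apply/negP => /inPP [j Hj Ex]; subst x.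
case: (adjP (leqnn k) Hj Ht) => E; first lia.
by move: Hne; rewrite E /= eqxx.
Qed.

Lemma N_B x : x \in N -> x \in B.
Proof.
move=> Hx; have := Hx; rewrite !inE => /andP [_ Ht].
rewrite connect1 // /del_path_edges Ht /=; apply/negP => /path_edgeP [_ H].
by have := N_notP Hx; rewrite H.
Qed.

Lemma pS i : i <= k -> p i \in S.
Proof. by move=> Hi; rewrite inE pP ?orbT. Qed.

Lemma G0 y : G (p 0) y -> y = p 1.
Proof.
case/and3P => Ht _ yS.
case: (boolP (y \in P)) => [/inPP [j Hj Ey]|yP].
  subst y; case: (adjP (leq0n k) Hj Ht) => [->|] //; lia.
have := B_notP_T (notP_B yS yP) yP Hk; by rewrite Tsym Ht.
Qed.

Lemma Gint i y : 1 <= i -> i < k -> G (p i) y -> y = p i.-1 \/ y = p i.+1.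
Proof. by move=> H1 H2 /and3P [Ht _ _]; apply: nbr_int. Qed.

Lemma Gp a : a < k -> G (p a) (p a.+1) /\ G (p a.+1) (p a).
Proof.
move=> Ha; rewrite /induced !pS ?(ltnW Ha) // !andbT Tp //; split => //.
by rewrite Tsym Tp.
Qed.

Lemma switched_p a b : a <= k -> b <= k -> T (p a) (p b) -> switched T p k (p a) (p b).
Proof.
move=> Ha Hb Ht; rewrite /switched Ht.
have /negbTE -> : p a \notin N by apply/negP => /N_notP; rewrite pP.
have /negbTE -> : p b \notin N by apply/negP => /N_notP; rewrite pP.
by rewrite !andbF.
Qed.

Lemma G'p a : a < k -> G' (p a) (p a.+1) /\ G' (p a.+1) (p a).
Proof.
move=> Ha; rewrite /induced !pS ?(ltnW Ha) // !switched_p ?(ltnW Ha) // ?Tp //.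
by rewrite Tsym Tp.
Qed.

Lemma G'h h : h \in N -> G' (p 0) h /\ G' h (p 0).
Proof.
move=> Hh; rewrite /induced pS // inE N_B // /switched Hh !eqxx /=.
by rewrite !orbT.
Qed.

Definition tau x := if [pick i : 'I_k.+1 | p i == x] is Some i then p (k - i) else x.

Lemma tauP i : i <= k -> tau (p i) = p (k - i).
Proof.
rewrite /tau => Hi; case: pickP => [j /eqP Hj | H].
  by rewrite (p_inj _ Hi Hj) // -ltnS.
by have := H (Ordinal (Hi : i < k.+1)); rewrite /= eqxx.
Qed.

Lemma tauN x : x \notin P -> tau x = x.
Proof.
rewrite /tau => xP; case: pickP => [j /eqP Hj | //].
by move: xP; rewrite -Hj pP // -ltnS.
Qed.

Lemma tau_inj : injective tau.
Proof.
move=> x y; case: (boolP (x \in P)) => [/inPP [i Hi ->]|xP];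
 case: (boolP (y \in P)) => [/inPP [j Hj ->]|yP].
- by rewrite !tauP // => /p_inj E; rewrite (_ : i = j) //; apply/eqP; move: E; lia.
- by rewrite tauP // tauN // => E; move: yP; rewrite -E pP //; lia.
- by rewrite tauP // tauN // => E; move: xP; rewrite E pP //; lia.
- by rewrite !tauN.
Qed.

Lemma tauS x : x \in S -> tau x \in S.
Proof.
case: (boolP (x \in P)) => [/inPP [i Hi ->]|xP]; last by rewrite tauN.
by rewrite tauP // => _; apply: pS; lia.
Qed.

Lemma tau_edge x y : G x y -> G' (tau x) (tau y).
Proof.
move=> Hg; have := Hg; case/and3P => Ht xS yS.
case: (boolP (x \in P)) => [/inPP [i Hi Ex]|xP];
 case: (boolP (y \in P)) => [/inPP [j Hj Ey]|yP].
- subst x y; rewrite !tauP //.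
  case: (adjP Hi Hj Ht) => E; subst.
    have -> : k - i = (k - i.+1).+1 by lia.
    by case: (G'p (_ : k - i.+1 < k)); [lia|].
  have -> : k - j = (k - j.+1).+1 by lia.
  by case: (G'p (_ : k - j.+1 < k)); [lia|].
- subst x; rewrite (tauN yP) tauP //.
  case: (ltnP i k) => Hik.
    by have := B_notP_T (notP_B yS yP) yP Hik; rewrite Tsym Ht.
  have Eik : i = k by lia.
  subst i; rewrite subnn; case: (G'h (_ : y \in N)) => //.
  rewrite !inE Ht andbT; apply/negP => /eqP E; move: yP; rewrite E pP //; lia.
- subst y; rewrite (tauN xP) tauP //.
  case: (ltnP j k) => Hjk.
    by have := B_notP_T (notP_B xS xP) xP Hjk; rewrite Ht.
  have Ejk : j = k by lia.
  subst j; rewrite subnn; case: (G'h (_ : x \in N)) => //.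
  rewrite !inE Tsym Ht andbT; apply/negP => /eqP E; move: xP; rewrite E pP //; lia.
- rewrite !tauN // /induced xS yS /switched Ht.
  have /negbTE -> : x != p k by apply/eqP => E; move: xP; rewrite E pP.
  have /negbTE -> : y != p k by apply/eqP => E; move: yP; rewrite E pP.
  by [].
Qed.

Lemma Gnbr x : x \in S -> exists y, G x y.
Proof.
move=> xS; case: (boolP (x \in P)) => [/inPP [i Hi Ex]|xP].
  subst x; case: (ltnP i k) => Hik; first by exists (p i.+1); case: (Gp Hik).
  have Eik : i = k by lia.
  subst i; exists (p k.-1); have Hk1 : k.-1 < k by lia.
  by case: (Gp Hk1); rewrite (ltn_predK Hk).
have xB := notP_B xS xP.
have Hne : p k != x by apply/eqP => E; move: xP; rewrite -E pP.
have xc : connect D (p k) x by rewrite -inB.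
have [u Hu /andP [Hut _]] := connect_last xc Hne.
exists u; rewrite /induced Tsym Hut xS inE.
by rewrite inB Hu.
Qed.

Lemma G'nbr x : x \in S -> exists y, G' x y.
Proof.
move=> xS; case: (boolP (x \in P)) => [/inPP [i Hi Ex]|xP].
  subst x; case: (ltnP i k) => Hik; first by exists (p i.+1); case: (G'p Hik).
  have Eik : i = k by lia.
  subst i; exists (p k.-1); have Hk1 : k.-1 < k by lia.
  by case: (G'p Hk1); rewrite (ltn_predK Hk).
have [y Hy] := Gnbr xS.
by exists (tau y); have := tau_edge Hy; rewrite tauN.
Qed.

Lemma inj2 (f : V -> V) u v a b : (a = u \/ a = v) -> (b = u \/ b = v) ->
  f u != f v -> f a = f b -> a = b.
Proof.
by case=> ->; case=> -> // /eqP H E; case: H; rewrite E.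
Qed.

Lemma main_even : ~~ odd k -> forall l, wk G l (p 0) <= wk G' l (p 0).
Proof.
move=> Hev l.
have Hm : k = (k./2).*2 by rewrite -{1}(odd_double_half k) (negbTE Hev).
set m := k./2 in Hm.
have Hm0 : 0 < m by lia.
pose R x y := (exists2 i, i < m & x = p i /\ y = p i) \/ (x \in S /\ y = tau x).
apply: (@wk_sim _ _ _ R); last by left; exists 0.
move=> x y [[i Him [-> ->]]|[xS ->]].
- exists id; split => // a Ha.
  have HR : forall j, j <= m -> R (p j) (p j).
    move=> j Hj; case: (ltnP j m) => Hjm; first by left; exists j.
    right; rewrite pS ?tauP; try lia; split => //; congr p; lia.
  case: i Him Ha => [|i] Him Ha.
    rewrite (G0 Ha); split; first by case: (G'p Hk).
    by apply: HR; lia.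
  have Hik : i.+1 < k by lia.
  have Hik' : i < k by lia.
  have [->|->] := Gint (ltn0Sn i) Hik Ha.
  + split; [by case: (G'p Hik') | apply: HR; lia].
  + split; [by case: (G'p Hik) | apply: HR; lia].
- exists tau; split; first by move=> a b _ _; apply: tau_inj.
  move=> a Ha; split; first exact: tau_edge.
  by right; split => //; case/and3P: Ha.
Qed.

Lemma main_odd h : h \in N -> odd k -> forall l, 1 <= l -> wk G l (p 0) <= wk G' l (p 0).
Proof.
move=> Hh Hod l Hl.
have Hm : k = (k./2).*2.+1 by rewrite -{1}(odd_double_half k) Hod.
set m := k./2 in Hm.
have hP : h \notin P := N_notP Hh.
pose R x y := (x = p 0 /\ y = h) \/ (exists2 i, 0 < i <= m & x = p i /\ y = p i.-1)
   \/ (x \in S /\ y = tau x).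
have HR : forall j, 0 < j <= m.+1 -> R (p j) (p j.-1).
  move=> j Hj; case: (ltnP m j) => Hjm.
    right; right; split; first by apply: pS; lia.
    rewrite tauP; last lia; congr p; lia.
  by right; left; exists j => //; lia.
have Hsim : forall x y, R x y -> exists f : V -> V,
      (forall a b, G x a -> G x b -> f a = f b -> a = b) /\
      (forall a, G x a -> G' y (f a) /\ R a (f a)).
  move=> x y [[-> ->]|[[i Hi [-> ->]]|[xS ->]]].
  - exists (fun _ => p 0); split.
      by move=> a b /G0 -> /G0 ->.
    move=> a /G0 ->; split; first by case: (G'h Hh).
    by apply: (HR 1); lia.
  - have Hik : i < k by lia.
    have Hi1 : 1 <= i by lia.
    pose f := fun a => if a == p i.+1 then p i else if i == 1 then h else p i.-2.
    exists f.
    have Hne : p i.-1 != p i.+1 by apply/eqP => /p_inj; lia.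
    split.
      move=> a b Ha Hb; apply: (@inj2 f _ _ _ _ (Gint Hi1 Hik Ha) (Gint Hi1 Hik Hb)); rewrite /f.
      rewrite eqxx (negbTE Hne); case: ifP => _.
        by apply/eqP => E; move: hP; rewrite E pP //; lia.
      by apply/eqP => /p_inj; lia.
    move=> a Ha; case: (Gint Hi1 Hik Ha) => [|] ->; rewrite /f.
      rewrite (negbTE Hne); case: ifP => [/eqP Ei1|Ei1].
        subst i; split; [by case: (G'h Hh) | by left].
      have Hi2 : i.-2 < k by lia.
      have E : (i.-2).+1 = i.-1 by move/negbT: Ei1; lia.
      split; first by case: (G'p Hi2); rewrite E.
      by apply: HR; lia.
    rewrite eqxx; split; last by apply: (HR i.+1); lia.
    have Hi1' : i.-1 < k by lia.
    by case: (G'p Hi1'); rewrite (ltn_predK (_ : 0 < i)) //; lia.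
  - exists tau; split; first by move=> a b _ _; apply: tau_inj.
    move=> a Ha; split; first exact: tau_edge.
    by right; right; split => //; case/and3P: Ha.
case: l Hl => [|l] // _ /=.
rewrite (big_pred1 (p 1)); last first.
  move=> y; apply/idP/eqP => [/G0 //|->]; by case: (Gp Hk).
apply: (leq_trans (@wk_sim _ _ _ R Hsim l _ _ (HR 1 _))); first lia.
have HS : forall x y, G' x y -> y \in S by move=> x y /and3P [].
exact: (@wk_mono V G' S HS G'nbr l (p 0) (pS (leq0n k))).
Qed.

End Struct.

Theorem corollary5 (V : finType) (T : rel V) (p : nat -> V) (k : nat) :
  is_tree T ->
  (1 <= k)%N ->
  is_path_in T p k ->
  (forall i, (1 <= i)%N -> (i <= k.-1)%N -> deg T (p i) = 2%N) ->
  forall l : nat, (1 <= l)%N ->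
    ((walks l (p 0%N) (induced T (compB T p k :|: path_verts p k)))%:Z
       - (walks l (p 0%N) (path_edge p k))%:Z
     <= (walks l (p 0%N) (induced (switched T p k) (compB T p k :|: path_verts p k)))%:Z
       - (walks l (p 0%N) (path_edge p k))%:Z)%R.
Proof.
move=> Htree Hk Hpath Hdeg l Hl.
rewrite lerD2r lez_nat !walksE.
case: (set_0Vmem (nbhd T (p k) :\ p k.-1)) => [HN|[h Hh]].
- apply: (@wk_sim V _ _ (fun x y => x = y)) => // x y <-; exists id; split => // a Ha; split => //.
  case/and3P: Ha => Ht xS aS; rewrite /induced xS aS /switched /= HN !in_set0 !andbF Ht.
  by [].
- case: (boolP (odd k)) => Hod.
  + by apply: (main_odd Htree Hk Hpath Hdeg Hh Hod Hl).
  + by apply: (main_even Htree Hk Hpath Hdeg Hod).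
Qed.
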